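(* Let $\mathcal C$ be a pointed category with finite coproducts, $F\colon\mathcal C\to Ab$ a reduced functor and $X\in\mathcal C$. Then $$T_2F(X)=F(X)\Big/\Big\{\big(\nabla^3_*-(\nabla^2r_{12})_*-(\nabla^2r_{13})_*-(\nabla^2r_{23})_*+r_{1*}+r_{2*}+r_{3*}\big)(x)\ :\ x\in F(X\vee X\vee X)\Big\},$$ where $g_*=F(g)$.
   Context: - $\nabla^n\colon X^{\vee n}\to X$ is the folding map. - $r_k\colon X\vee X\vee X\to X$ is the retraction onto the $k$-th summand. - $r_{jk}\colon X\vee X\vee X\to X\vee X$ ($j<k$) maps the $j$-th and $k$-th summands identically onto the first and second summand and the remaining summand to $0$. - For a reduced $F$: $cr_2F(X,Y)=\ker(F(X\vee Y)\to F(X)\oplus F(Y))$ and $cr_3F(X,Y,Z)=cr_2(cr_2F(-,Z))(X,Y)$, a subgroup of $F(X\vee Y\vee Z)$. - $T_2F(X)$ is defined as the cokernel of $cr_3F(X,X,X)\subseteq F(X^{\vee3})\xrightarrow{F(\nabla^3)}F(X)$. *)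

(* Defs.v *)
From HB Require Import structures.
From mathcomp Require Import all_boot all_algebra.
Set Implicit Arguments. Unset Strict Implicit. Unset Printing Implicit Defensive.
Import GRing.Theory.
Local Open Scope ring_scope.

Record PCat := {
  Ob : Type;
  Hom : Ob -> Ob -> Type;
  idm : forall A, Hom A A;
  comp : forall A B C, Hom B C -> Hom A B -> Hom A C;
  compA : forall A B C D (h : Hom C D) (g : Hom B C) (f : Hom A B),
      comp h (comp g f) = comp (comp h g) f;
  comp_idl : forall A B (f : Hom A B), comp (idm B) f = f;
  comp_idr : forall A B (f : Hom A B), comp f (idm A) = f;
  zobj : Ob;
  from_z : forall A, Hom zobj A;
  to_z : forall A, Hom A zobj;
  from_z_uniq : forall A (f : Hom zobj A), f = from_z A;
  to_z_uniq : forall A (f : Hom A zobj), f = to_z A;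
  cop : Ob -> Ob -> Ob;
  inl : forall A B, Hom A (cop A B);
  inr : forall A B, Hom B (cop A B);
  copair : forall A B C, Hom A C -> Hom B C -> Hom (cop A B) C;
  copair_inl : forall A B C (f : Hom A C) (g : Hom B C), comp (copair f g) (inl A B) = f;
  copair_inr : forall A B C (f : Hom A C) (g : Hom B C), comp (copair f g) (inr A B) = g;
  copair_uniq : forall A B C (f : Hom A C) (g : Hom B C) (h : Hom (cop A B) C),
      comp h (inl A B) = f -> comp h (inr A B) = g -> h = copair f g
}.

Arguments Hom : clear implicits.
Arguments idm {p} A.
Arguments comp {p A B C}.
Arguments zobj {p}.
Arguments from_z {p} A.
Arguments to_z {p} A.
Arguments cop {p}.
Arguments inl {p} A B.
Arguments inr {p} A B.
Arguments copair {p A B C}.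

Section Cat.
Variable C : PCat.

Definition zm (A B : Ob C) : Hom C A B := comp (from_z B) (to_z A).

Definition copmap A B A' B' (f : Hom C A A') (g : Hom C B B') : Hom C (cop A B) (cop A' B') :=
  copair (comp (inl A' B') f) (comp (inr A' B') g).

Definition ret1 (A B : Ob C) : Hom C (cop A B) A := copair (idm A) (zm B A).
Definition ret2 (A B : Ob C) : Hom C (cop A B) B := copair (zm A B) (idm B).

(* X \/ X \/ X is taken to be (X \/ X) \/ X *)
Definition X3 (X : Ob C) : Ob C := cop (cop X X) X.
Definition fold2 (X : Ob C) : Hom C (cop X X) X := copair (idm X) (idm X).
Definition fold3 (X : Ob C) : Hom C (X3 X) X := copair (fold2 X) (idm X).
Definition r_1 (X : Ob C) : Hom C (X3 X) X := copair (copair (idm X) (zm X X)) (zm X X).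
Definition r_2 (X : Ob C) : Hom C (X3 X) X := copair (copair (zm X X) (idm X)) (zm X X).
Definition r_3 (X : Ob C) : Hom C (X3 X) X := copair (copair (zm X X) (zm X X)) (idm X).
Definition r_12 (X : Ob C) : Hom C (X3 X) (cop X X) :=
  copair (copair (inl X X) (inr X X)) (zm X (cop X X)).
Definition r_13 (X : Ob C) : Hom C (X3 X) (cop X X) :=
  copair (copair (inl X X) (zm X (cop X X))) (inr X X).
Definition r_23 (X : Ob C) : Hom C (X3 X) (cop X X) :=
  copair (copair (zm X (cop X X)) (inl X X)) (inr X X).
End Cat.

Record AbFunctor (C : PCat) := {
  Fob : Ob C -> zmodType;
  Fmap : forall A B, Hom C A B -> Fob A -> Fob B;
  Fmap_sub : forall A B (f : Hom C A B) (x y : Fob A),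
      Fmap f (x - y) = Fmap f x - Fmap f y;
  Fmap_id : forall A (x : Fob A), Fmap (idm A) x = x;
  Fmap_comp : forall A B D (g : Hom C B D) (f : Hom C A B) (x : Fob A),
      Fmap (comp g f) x = Fmap g (Fmap f x)
}.

Arguments Fob {C}.
Arguments Fmap {C} a {A B}.

Section Cross.
Variables (C : PCat) (F : AbFunctor C).

Definition reduced : Prop := forall x : Fob F zobj, x = 0.

(* cr_2F(A,B) = ker(F(A \/ B) -> F(A) (+) F(B)) as a predicate on F(A \/ B) *)
Definition cr2 (A B : Ob C) (x : Fob F (cop A B)) : Prop :=
  Fmap F (ret1 A B) x = 0 /\ Fmap F (ret2 A B) x = 0.

(* cr_3F(X,Y,Z) = cr_2(cr_2F(-,Z))(X,Y), a subgroup of F((X \/ Y) \/ Z):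
   x lies in cr_2F(X\/Y, Z) and is killed by G(r1) = F(r1 \/ id_Z), G(r2) = F(r2 \/ id_Z),
   where G = cr_2F(-,Z). *)
Definition cr3 (X Y Z : Ob C) (x : Fob F (cop (cop X Y) Z)) : Prop :=
  @cr2 (cop X Y) Z x /\
  Fmap F (copmap (ret1 X Y) (idm Z)) x = 0 /\
  Fmap F (copmap (ret2 X Y) (idm Z)) x = 0.

(* The subgroup F(nabla^3)(cr_3F(X,X,X)) of F(X); T_2F(X) is F(X) modulo it. *)
Definition T2_rel (X : Ob C) (y : Fob F X) : Prop :=
  exists x : Fob F (X3 X), @cr3 X X X x /\ y = Fmap F (fold3 X) x.

Definition alt_map (X : Ob C) (x : Fob F (X3 X)) : Fob F X :=
  Fmap F (fold3 X) x
  - Fmap F (comp (fold2 X) (r_12 X)) x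
  - Fmap F (comp (fold2 X) (r_13 X)) x
  - Fmap F (comp (fold2 X) (r_23 X)) x
  + Fmap F (r_1 X) x + Fmap F (r_2 X) x + Fmap F (r_3 X) x.
End Cross.
Arguments T2_rel {C} F X y.
Arguments alt_map {C} F X x.
Arguments cr2 {C} F A B x.
Arguments cr3 {C} F X Y Z x.
Arguments reduced {C} F.

(* Main.v *)
Require Import Defs.
From mathcomp Require Import all_boot all_algebra.
Set Implicit Arguments. Unset Strict Implicit.
Import GRing.Theory.
Local Open Scope ring_scope.
Local Notation Hom := Defs.Hom.
Local Notation comp := Defs.comp.
Local Notation inl := Defs.inl.
Local Notation inr := Defs.inr.
Local Notation compA := Defs.compA.

Section Aux.
Variable C : PCat.

Lemma zmR (A B D : Ob C) (f : Hom C B D) : comp f (zm A B) = zm A D.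
Proof. by rewrite /zm compA (from_z_uniq (comp f (from_z B))). Qed.

Lemma zmL (A B D : Ob C) (f : Hom C A B) : comp (zm B D) f = zm A D.
Proof. by rewrite /zm -compA (to_z_uniq (comp (to_z B) f)). Qed.

Lemma zmL' (A B D E : Ob C) (f : Hom C A B) :
  comp (from_z D) (comp (to_z B) f) = zm A D.
Proof. by rewrite compA -/(zm B D) zmL. Qed.

Lemma zmR' (A B D : Ob C) (f : Hom C B D) : comp f (comp (from_z B) (to_z A)) = zm A D.
Proof. exact: zmR. Qed.

Lemma cpl (A B D E : Ob C) (f : Hom C A D) (g : Hom C B D) (h : Hom C E A) :
  comp (copair f g) (comp (inl A B) h) = comp f h.
Proof. by rewrite compA copair_inl. Qed.

Lemma cpr (A B D E : Ob C) (f : Hom C A D) (g : Hom C B D) (h : Hom C E B) :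
  comp (copair f g) (comp (inr A B) h) = comp g h.
Proof. by rewrite compA copair_inr. Qed.

Variable X : Ob C.
Local Notation i1 := (comp (inl (cop X X) X) (inl X X)).
Local Notation i2 := (comp (inl (cop X X) X) (inr X X)).
Local Notation i3 := (inr (cop X X) X).

Lemma eta3 Y (h : Hom C (X3 X) Y) :
  h = copair (copair (comp h i1) (comp h i2)) (comp h i3).
Proof.
apply: copair_uniq => //; apply: copair_uniq; by rewrite compA.
Qed.

Lemma ext3 Y (h k : Hom C (X3 X) Y) :
  comp h i1 = comp k i1 -> comp h i2 = comp k i2 -> comp h i3 = comp k i3 -> h = k.
Proof. by move=> e1 e2 e3; rewrite (eta3 h) (eta3 k) e1 e2 e3. Qed.

Definition E (b1 b2 b3 : bool) : Hom C (X3 X) (X3 X) :=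
  copair (copair (if b1 then i1 else zm X (X3 X)) (if b2 then i2 else zm X (X3 X)))
         (if b3 then i3 else zm X (X3 X)).

End Aux.

Ltac simp := repeat progress rewrite ?zmR ?zmL ?zmL' ?zmR' ?cpl ?cpr ?copair_inl ?copair_inr
   ?comp_idl ?comp_idr -?compA.


Ltac cat := rewrite /E /fold3 /fold2 /r_12 /r_13 /r_23 /r_1 /r_2 /r_3 /ret1 /ret2 /copmap;
  apply: ext3; simp => //.

Section Main.
Variables (C : PCat) (F : AbFunctor C) (hF : reduced F) (X : Ob C).

Lemma Fmap0 A B (f : Hom C A B) : Fmap F f 0 = 0.
Proof. by rewrite -(subrr (0 : Fob F A)) Fmap_sub subrr. Qed.
Lemma FmapN A B (f : Hom C A B) x : Fmap F f (- x) = - Fmap F f x.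
Proof. by rewrite -sub0r Fmap_sub Fmap0 sub0r. Qed.
Lemma FmapD A B (f : Hom C A B) x y : Fmap F f (x + y) = Fmap F f x + Fmap F f y.
Proof. have -> : x + y = x - (- y) by rewrite opprK. by rewrite Fmap_sub FmapN opprK. Qed.
Lemma Fzm A B x : Fmap F (zm A B) x = 0.
Proof. by rewrite /zm Fmap_comp (hF (Fmap F (to_z A) x)) Fmap0. Qed.

Definition xp (x : Fob F (X3 X)) : Fob F (X3 X) :=
  Fmap F (E X true true true) x - Fmap F (E X true true false) x
  - Fmap F (E X true false true) x - Fmap F (E X false true true) x
  + Fmap F (E X true false false) x + Fmap F (E X false true false) x
  + Fmap F (E X false false true) x.

Lemma E000 : E X false false false = zm _ _.
Proof. by cat. Qed.

Lemma expand Y (P : Hom C (X3 X) Y) x : Fmap F P (xp x) =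
  Fmap F (comp P (E X true true true)) x - Fmap F (comp P (E X true true false)) x
  - Fmap F (comp P (E X true false true)) x - Fmap F (comp P (E X false true true)) x
  + Fmap F (comp P (E X true false false)) x + Fmap F (comp P (E X false true false)) x
  + Fmap F (comp P (E X false false true)) x.
Proof. by rewrite /xp !FmapD !FmapN !Fmap_comp. Qed.

Lemma P000 Y (P : Hom C (X3 X) Y) x : Fmap F (comp P (E X false false false)) x = 0.
Proof. by rewrite E000 zmR Fzm. Qed.

Lemma Z1 (V : zmodType) (a b c : V) : a - b - c - a + 0 + b + c = 0.
Proof. by rewrite addr0 (addrAC _ (-c)) (addrAC a) subrr sub0r addrAC subrK addNr. Qed.
Lemma Z2 (V : zmodType) (a b c : V) : a - b - a - c + b + 0 + c = 0.
Proof. by rewrite addr0 (addrAC a) subrr sub0r (addrAC (-b)) addNr sub0r addNr. Qed.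
Lemma Z3 (V : zmodType) (a b c : V) : a - a - b - c + b + c + 0 = 0.
Proof. by rewrite addr0 subrr sub0r (addrAC (-b)) addNr sub0r addNr. Qed.

Lemma kill1 Y (P : Hom C (X3 X) Y) x :
  (forall b2 b3, comp P (E X true b2 b3) = comp P (E X false b2 b3)) ->
  Fmap F P (xp x) = 0.
Proof. by move=> h; rewrite expand !h P000; apply: Z1. Qed.
Lemma kill2 Y (P : Hom C (X3 X) Y) x :
  (forall b1 b3, comp P (E X b1 true b3) = comp P (E X b1 false b3)) ->
  Fmap F P (xp x) = 0.
Proof. by move=> h; rewrite expand !h P000; apply: Z2. Qed.
Lemma kill3 Y (P : Hom C (X3 X) Y) x :
  (forall b1 b2, comp P (E X b1 b2 true) = comp P (E X b1 b2 false)) ->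
  Fmap F P (xp x) = 0.
Proof. by move=> h; rewrite expand !h P000; apply: Z3. Qed.

Lemma fold_xp x : Fmap F (fold3 X) (xp x) = alt_map F X x.
Proof.
rewrite expand /alt_map.
have -> : comp (fold3 X) (E X true true true) = fold3 X by cat.
have -> : comp (fold3 X) (E X true true false) = comp (fold2 X) (r_12 X) by cat.
have -> : comp (fold3 X) (E X true false true) = comp (fold2 X) (r_13 X) by cat.
have -> : comp (fold3 X) (E X false true true) = comp (fold2 X) (r_23 X) by cat.
have -> : comp (fold3 X) (E X true false false) = r_1 X by cat.
have -> : comp (fold3 X) (E X false true false) = r_2 X by cat.
have -> : comp (fold3 X) (E X false false true) = r_3 X by cat.
by [].
Qed.

End Main.

Theorem proposition2p17 (C : PCat) (F : AbFunctor C) (hF : reduced F) (X : Ob C) :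
  forall y : Fob F X, T2_rel F X y <-> exists x : Fob F (X3 X), y = alt_map F X x.
Proof.
move=> y; split.
  case=> x [[[h1 h2] [h3 h4]] ->]; exists x.
  have e12 : r_12 X = ret1 (cop X X) X by cat.
  have e3 : r_3 X = ret2 (cop X X) X by cat.
  have e13 : r_13 X = copmap (ret1 X X) (idm X) by cat.
  have e23 : r_23 X = copmap (ret2 X X) (idm X) by cat.
  have e1 : r_1 X = comp (ret1 X X) (r_12 X) by cat.
  have e2 : r_2 X = comp (ret2 X X) (r_12 X) by cat.
  rewrite /alt_map e1 e2 !Fmap_comp e12 e13 e23 e3 h1 h2 h3 h4 !Fmap0.
  by rewrite !subr0 !addr0.
case=> x ->; exists (xp x); split; last by rewrite fold_xp.
split; first split.
- by apply: kill3 => // b1 b2; case: b1; case: b2; cat.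
- by apply: kill1 => // b1 b2; case: b1; case: b2; cat.
split.
- by apply: kill2 => // b1 b2; case: b1; case: b2; cat.
- by apply: kill1 => // b1 b2; case: b1; case: b2; cat.
Qed.
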